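(* Let $n$ be even and $S\ge2$. Any deterministic AMPC algorithm with I/O capacity $S$ that computes $\mathrm{1v2Cycle}$ on $n$ vertices requires at least $\frac13\log_S n-\frac13\log_S 32=\Omega(\log_S n)$ rounds. In particular, if $S=n^{\epsilon}$ for $\epsilon\in(0,1)$, any such algorithm requires $\Omega(1/\epsilon)$ rounds.
   Context: Graphs on vertex set $\{1,\dots,n\}$ are encoded as $x\in\{0,1\}^N$, $N=\binom n2$, one bit per unordered pair (adjacency matrix). $\mathrm{1v2Cycle}:\Delta\to\{0,1\}$ is defined on the set $\Delta$ of graphs that are either a single $n$-cycle (value $1$) or a disjoint union of two cycles of length $n/2$ (value $0$). AMPC model with I/O capacity $S$: computation proceeds in rounds communicating through distributed data stores (DDS) $\mathcal{D}_0,\dots,\mathcal{D}_R$, each storing under each key a multiset of values (possibly empty; duplicates allowed, each value written by a unique machine). On input $x$, $\mathcal{D}_0$ consists of the pairs $(i,x_i)$, $i=1,\dots,N$. In round $r\ge1$ each machine (arbitrarily many, computationally unbounded, deterministic) adaptively queries keys of $\mathcal{D}_{r-1}$, receiving the whole multiset under the key, with later queries depending arbitrarily on earlier ones and their responses; the total number of values in responses plus the number of empty-response queries is at most $S$; it then writes at most $S$ key-value pairs to $\mathcal{D}_r$ as a function of its queries and responses. The algorithm is also run on invalid inputs $x\in\{0,1\}^N\setminus\Delta$ (a machine exceeding its budget stops and writes nothing), and in every round, on every input in $\{0,1\}^N$, at most $S$ values are written under any single key. The algorithm computes $g$ in $R$ rounds if for every $x\in\Delta$, $\mathcal{D}_R$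 contains exactly the single pair $(\textsc{answer},g(x))$. *)

(* Defs.v *)
From Stdlib Require Import Rdefinitions Raxioms Rpower.
From HB Require Import structures.
From mathcomp Require Import all_boot.
From mathcomp Require Import perm.

Set Implicit Arguments.
Unset Strict Implicit.
Unset Printing Implicit Defensive.

(* Graphs on the vertex set 'I_n (= {1,..,n} shifted to {0,..,n-1}),  *)
(* encoded by one bit per unordered pair {u,v}, u < v.                 *)

Definition upair (n : nat) := {p : 'I_n * 'I_n | (p.1 < p.2)%N}.
HB.instance Definition _ (n : nat) :=
  Finite.copy (upair n) {p : 'I_n * 'I_n | (p.1 < p.2)%N}.

Definition adj (n : nat) (x : {ffun upair n -> bool}) (u v : 'I_n) : bool :=
  if @insub _ (fun p : 'I_n * 'I_n => (p.1 < p.2)%N) (upair n) (u, v) is Some p then x p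
  else if @insub _ (fun p : 'I_n * 'I_n => (p.1 < p.2)%N) (upair n) (v, u) is Some p then x p
  else false.

Definition cyc_rel (m a b : nat) : bool :=
  (a != b) && ((b == (a + 1) %% m) || (a == (b + 1) %% m)).

Definition two_cyc_rel (h a b : nat) : bool :=
  ((a < h) == (b < h)) && cyc_rel h (a %% h) (b %% h).

Definition one_cycle (n : nat) (x : {ffun upair n -> bool}) : Prop :=
  exists s : {perm 'I_n}, forall u v : 'I_n, adj x (s u) (s v) = cyc_rel n u v.

Definition two_cycles (n : nat) (x : {ffun upair n -> bool}) : Prop :=
  exists s : {perm 'I_n}, forall u v : 'I_n, adj x (s u) (s v) = two_cyc_rel n./2 u v.

(* A DDS is a finite multiset of key-value pairs (a seq; its order is  *)
(* never observable by machines, see [resp]).                          *)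

Definition dds (K V : Type) := seq (K * V).

(* Response to a query of key k: the multiset of values stored under k,
   given as a multiplicity function (so no order is observable). *)
Definition resp (K V : eqType) (D : dds K V) (k : K) : V -> nat :=
  fun v => count (pred1 (k, v)) D.

Definition resp_size (K V : eqType) (D : dds K V) (k : K) : nat :=
  count (fun p => p.1 == k) D.

Inductive action (K V : Type) :=
| Query of K
| Write of seq (K * V).
Arguments Query {K V}.
Arguments Write {K V}.

(* A deterministic machine: given its history (its past queries and the
   responses received) it either issues its next query or stops and
   writes a list of key-value pairs. *)
Definition machine (K V : Type) := seq (K * (V -> nat)) -> action K V.

(* A
   machine exceeding its budget (or trying to write more than S pairs)
   stops and writes nothing.  Fuel S.+1 suffices since each query costs >= 1. *)
Fixpoint run_machine (K V : eqType) (S : nat) (D : dds K V) (m : machine K V)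
    (fuel : nat) (h : seq (K * (V -> nat))) (c : nat) : seq (K * V) :=
  match fuel with
  | 0 => [::]
  | fuel'.+1 =>
    match m h with
    | Write w => if size w <= S then w else [::]
    | Query k =>
      let c' := c + maxn 1 (resp_size D k) in
      if c' <= S then run_machine S D m fuel' (rcons h (k, resp D k)) c'
      else [::]
    end
  end.

Definition exec_machine (K V : eqType) (S : nat) (D : dds K V) (m : machine K V) :=
  run_machine S D m S.+1 [::] 0.

Definition exec_round (K V : eqType) (S : nat) (D : dds K V) (ms : seq (machine K V)) :
  dds K V := flatten [seq exec_machine S D m | m <- ms].

Definition algorithm (K V : Type) := seq (seq (machine K V)).

Definition dds0 (n : nat) (K V : eqType) (keyIdx : upair n -> K) (valBit : bool -> V)
  (x : {ffun upair n -> bool}) : dds K V :=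
  [seq (keyIdx e, valBit (x e)) | e <- enum (@predT (upair n))].

Definition dds_at (n : nat) (K V : eqType) (S : nat) (keyIdx : upair n -> K)
  (valBit : bool -> V) (alg : algorithm K V) (x : {ffun upair n -> bool}) (r : nat) :
  dds K V := foldl (exec_round S) (dds0 keyIdx valBit x) (take r alg).

Definition key_load_ok (n : nat) (K V : eqType) (S : nat) (keyIdx : upair n -> K)
  (valBit : bool -> V) (alg : algorithm K V) : Prop :=
  forall (x : {ffun upair n -> bool}) (r : nat) (k : K),
    r <= size alg -> resp_size (dds_at S keyIdx valBit alg x r) k <= S.

Definition computes_1v2Cycle (n : nat) (K V : eqType) (S : nat) (keyIdx : upair n -> K)
  (valBit : bool -> V) (answer : K) (alg : algorithm K V) : Prop :=
  forall x : {ffun upair n -> bool},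
    (one_cycle x -> dds_at S keyIdx valBit alg x (size alg) = [:: (answer, valBit true)]) /\
    (two_cycles x -> dds_at S keyIdx valBit alg x (size alg) = [:: (answer, valBit false)]).

Definition logb (b x : R) : R := Rdiv (ln x) (ln b).

Definition round_lower_bound (n S : nat) : R :=
  Rminus (Rmult (Rinv (IZR 3)) (logb (INR S) (INR n)))
         (Rmult (Rinv (IZR 3)) (logb (INR S) (IZR 32))).

(* Main.v *)
Require Import Defs.
From Stdlib Require Import Rdefinitions Raxioms Rpower Reals Lra FunctionalExtensionality.
From mathcomp Require Import all_boot all_algebra zify perm.
Set Implicit Arguments. Unset Strict Implicit. Unset Printing Implicit Defensive.
Import GRing.Theory Num.Theory.

(* Contents of keys after r rounds,
   restricted to a parity-gadget subcube of inputs, have (integer) polynomial degree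
   <= (S(S+1))^r; the final answer computes parity of the gadget bits, which has
   degree m = n/2 - 1. *)

Local Open Scope ring_scope.


Definition indb (b : bool) : int := if b then 1 else 0.

Definition peval (m : nat) (p : seq (int * {set 'I_m})) (z : {set 'I_m}) : int :=
  \sum_(t <- p) t.1 * indb (t.2 \subset z).

Definition deg_le (m : nat) (d : nat) (f : {set 'I_m} -> int) : Prop :=
  exists p : seq (int * {set 'I_m}),
    all (fun t : int * {set 'I_m} => (#|t.2| <= d)%N) p /\ forall z, f z = peval p z.

Lemma deg_le_ext m d (f g : {set 'I_m} -> int) :
  (forall z, f z = g z) -> deg_le d f -> deg_le d g.
Proof. move=> e [p [hp hf]]; exists p; split=> // z; by rewrite -e. Qed.

Lemma deg_le_mono m d d' (f : {set 'I_m} -> int) :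
  (d <= d')%N -> deg_le d f -> deg_le d' f.
Proof.
move=> le [p [hp hf]]; exists p; split=> //.
apply/allP=> t /(allP hp) h; exact: leq_trans h le.
Qed.

Lemma deg_le_const m d (c : int) : deg_le (m:=m) d (fun _ => c).
Proof.
exists [:: (c, set0)]; split; first by rewrite /= cards0.
by move=> z; rewrite /peval big_cons big_nil sub0set /= mulr1 addr0.
Qed.

Lemma deg_le_add m d (f g : {set 'I_m} -> int) :
  deg_le d f -> deg_le d g -> deg_le d (fun z => f z + g z).
Proof.
move=> [p [hp hf]] [q [hq hg]]; exists (p ++ q); split; first by rewrite all_cat hp hq.
by move=> z; rewrite hf hg /peval big_cat.
Qed.

Lemma deg_le_opp m d (f : {set 'I_m} -> int) :
  deg_le d f -> deg_le d (fun z => - f z).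
Proof.
move=> [p [hp hf]]; exists [seq (- t.1, t.2) | t <- p]; split.
  by rewrite all_map; apply/allP=> t /(allP hp).
move=> z; rewrite hf /peval big_map -sumrN; apply: eq_bigr=> t _ /=; by rewrite mulNr.
Qed.

Lemma deg_le_sub m d (f g : {set 'I_m} -> int) :
  deg_le d f -> deg_le d g -> deg_le d (fun z => f z - g z).
Proof. by move=> hf hg; apply: deg_le_add=> //; apply: deg_le_opp. Qed.

Lemma ind_subU m (A B z : {set 'I_m}) :
  indb (A \subset z) * indb (B \subset z) = indb (A :|: B \subset z).
Proof. by rewrite subUset; case: (A \subset z); case: (B \subset z); rewrite /= ?mulr1 ?mulr0 ?mul0r. Qed.

Lemma deg_le_mul m d e (f g : {set 'I_m} -> int) :
  deg_le d f -> deg_le e g -> deg_le (d + e) (fun z => f z * g z).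
Proof.
move=> [p [hp hf]] [q [hq hg]].
exists [seq (t.1 * u.1, t.2 :|: u.2) | t <- p, u <- q]; split.
  apply/allP=> w /allpairsP [[t u] [tp uq ->]] /=.
  apply: leq_trans (leq_card_setU _ _) _.
  by apply: leq_add; [apply: (allP hp) | apply: (allP hq)].
move=> z; rewrite hf hg /peval big_allpairs_dep mulr_suml; apply: eq_bigr=> t _.
rewrite mulr_sumr; apply: eq_bigr=> u _ /=.
by rewrite -ind_subU mulrACA.
Qed.

Lemma deg_le_sum m d (I : Type) (r : seq I) (F : I -> {set 'I_m} -> int) :
  (forall i, deg_le d (F i)) -> deg_le d (fun z => \sum_(i <- r) F i z).
Proof.
move=> h; elim: r => [|i r IH].
  by apply: deg_le_ext (@deg_le_const m d 0)=> z; rewrite big_nil.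
apply: deg_le_ext (deg_le_add (h i) IH)=> z; by rewrite big_cons.
Qed.

Lemma deg_le_var m (i : 'I_m) (F : bool -> int) : deg_le 1 (fun z => F (i \in z)).
Proof.
exists [:: (F false, set0); (F true - F false, [set i])]; split.
  by rewrite /= cards0 cards1.
move=> z; rewrite /peval !big_cons big_nil sub0set sub1set /= mulr1 addr0.
by case: (i \in z); rewrite /= ?mulr1 ?mulr0 ?addr0 // addrC subrK.
Qed.

Definition ideg (m d : nat) (Y : eqType) (g : {set 'I_m} -> Y) : Prop :=
  forall y, deg_le d (fun z => indb (g z == y)).

Lemma sum_image (m : nat) (Y : eqType) (g : {set 'I_m} -> Y) (F : Y -> {set 'I_m} -> int) z :
  F (g z) z = \sum_(y <- undup [seq g w | w <- enum [set: {set 'I_m}]]) indb (g z == y) * F y z.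
Proof.
have hin : g z \in undup [seq g w | w <- enum [set: {set 'I_m}]].
  by rewrite mem_undup; apply: map_f; rewrite mem_enum inE.
rewrite (bigD1_seq (g z)) ?undup_uniq //= eqxx mul1r big1 ?addr0 //.
by move=> y /negbTE; rewrite eq_sym => ->; rewrite mul0r.
Qed.

Lemma deg_le_bind (m a b : nat) (Y : eqType) (g : {set 'I_m} -> Y) (F : Y -> {set 'I_m} -> int) :
  ideg a g -> (forall y, deg_le b (F y)) -> deg_le (a + b) (fun z => F (g z) z).
Proof.
move=> hg hF; apply: deg_le_ext (fun z => esym (sum_image g F z)) _.
apply: deg_le_sum => y; exact: deg_le_mul.
Qed.

Lemma ideg_comp (m d : nat) (Y Y' : eqType) (g : {set 'I_m} -> Y) (f : Y -> Y') :
  ideg d g -> ideg d (fun z => f (g z)).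
Proof.
move=> hg y'; rewrite -[d]addn0.
exact: (@deg_le_bind m d 0 Y g (fun y _ => indb (f y == y')) hg (fun y => @deg_le_const m 0 _)).
Qed.

Lemma deg_le_pred (m d : nat) (Y : eqType) (g : {set 'I_m} -> Y) (P : pred Y) :
  ideg d g -> deg_le d (fun z => indb (P (g z))).
Proof.
move=> hg; have := ideg_comp P hg true.
by apply: deg_le_ext=> z; case: (P (g z)).
Qed.


Lemma deg_le_zero m d (f : {set 'I_m} -> int) : (forall z, f z = 0) -> deg_le d f.
Proof. by move=> h; apply: deg_le_ext (@deg_le_const m d 0) => z; rewrite h. Qed.

Lemma ie_lemma (m e : nat) (X : eqType) (I : Type) (F : I -> {set 'I_m} -> seq X)
  (hF : forall i, ideg e (F i)) (r : seq I) :
  forall (B G : nat) (g : {set 'I_m} -> int) (tau : seq (seq X)),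
  deg_le G g ->
  (forall z, g z != 0 -> (size (flatten [seq F i z | i <- r]) <= B)%N) ->
  deg_le (G + B * e) (fun z => g z * indb ([seq F i z | i <- r] == tau)).
Proof.
elim: r => [|i r IH] B G g [|t tau] hg hB /=.
- apply: deg_le_ext (deg_le_mono (leq_addr _ _) hg) => z; by rewrite /= mulr1.
- by apply: deg_le_zero => z; rewrite mulr0.
- by apply: deg_le_zero => z; rewrite mulr0.
apply: (@deg_le_ext _ _ (fun z => g z * indb (F i z == t) * indb ([seq F i0 z | i0 <- r] == tau))).
  by move=> z; rewrite eqseq_cons -mulrA; case: (F i z == t); rewrite /= ?mul1r ?mul0r.
case: t => [|x t].
- have h1 := IH B G g tau hg (fun z gz => leq_trans (leq_addl _ _) (eq_ind _ (fun s => (s <= B)%N) (hB z gz) _ (size_cat _ _))).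
  have hg2 : deg_le (G + e) (fun z => g z * indb (F i z != [::])).
    by apply: deg_le_mul => //; apply: (deg_le_pred (fun s => s != [::]) (hF i)).
  have h2 : deg_le (G + B * e) (fun z => g z * indb (F i z != [::]) * indb ([seq F i0 z | i0 <- r] == tau)).
    case: B hB {h1} => [|B] hB.
      apply: deg_le_zero => z; case: (g z =P 0) => [->|/eqP gz]; first by rewrite !mul0r.
      have := hB z gz; rewrite size_cat; case: (F i z) => [|a l] /=; first by rewrite mulr0 mul0r.
      by [].
    rewrite mulSn addnA; apply: IH => // z.
    have := hB z; rewrite /= size_cat.
    case: (F i z) => [|a l] /=; first by rewrite mulr0 eqxx.
    rewrite mulr1 => H gz; have := H gz; rewrite addSn ltnS; apply: leq_trans; apply: leq_addl.
  apply: deg_le_ext (deg_le_sub h1 h2) => z.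
  rewrite /indb; case: (F i z == [::]) => /=; by rewrite ?mulr1 ?mulr0 ?mul0r ?subr0 ?subrr.
- case: B hB => [|B] hB.
    apply: deg_le_zero => z; case: (g z =P 0) => [->|/eqP gz]; first by rewrite !mul0r.
    have := hB z gz; rewrite size_cat; case E: (F i z == x :: t); last by rewrite mulr0 mul0r.
    by rewrite (eqP E).
  rewrite mulSn addnA; apply: IH; first by apply: deg_le_mul => //; apply: (deg_le_pred (fun s => s == x :: t) (hF i)).
  move=> z; have := hB z; rewrite /= size_cat.
  case E: (F i z == x :: t); last by rewrite mulr0 eqxx.
  rewrite mulr1 (eqP E) => H gz; have := H gz; rewrite /= addSn ltnS; apply: leq_trans; apply: leq_addl.
Qed.


Definition flip (m : nat) (a : 'I_m) (z : {set 'I_m}) : {set 'I_m} :=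
  if a \in z then z :\ a else a |: z.

Lemma flipK m (a : 'I_m) : involutive (flip a).
Proof.
move=> z; rewrite {2}/flip; case: (boolP (a \in z)) => az.
  by rewrite /flip setD11 setD1K.
by rewrite /flip setU11 setU1K.
Qed.

Lemma flip_odd m (a : 'I_m) z : odd #|flip a z| = ~~ odd #|z|.
Proof.
rewrite /flip; case: ifP => az.
  by rewrite [in RHS](cardsD1 a) az add1n /= negbK.
by rewrite cardsU1 az add1n.
Qed.

Lemma flip_sub m (a : 'I_m) z (A : {set 'I_m}) : a \notin A -> (A \subset flip a z) = (A \subset z).
Proof.
move=> aA; rewrite /flip; case: ifP => az.
  apply/subsetP/subsetP => H x xA; have := H x xA; rewrite ?inE.
    by case/andP.
  by move=> ->; rewrite andbT; apply/eqP=> e; rewrite -e xA in aA.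
apply/subsetP/subsetP => H x xA; have := H x xA; rewrite ?inE.
  by case/orP=> // /eqP e; rewrite -e xA in aA.
by move=> ->; rewrite orbT.
Qed.

Definition sg (m : nat) (z : {set 'I_m}) : int := if odd #|z| then -1 else 1.

Lemma sum_mono_zero m (A : {set 'I_m}) : (#|A| < m)%N ->
  \sum_(z : {set 'I_m}) sg z * indb (A \subset z) = 0.
Proof.
move=> hA.
have [a aA] : exists a, a \notin A.
  case: (pickP (fun a => a \notin A)) => [a Ha|H]; first by exists a.
  have : #|A| = #|'I_m| by apply: eq_card => x; move: (H x) => /= /negbFE ->.
  by rewrite card_ord => e; rewrite e ltnn in hA.
set s := \sum_(z : {set 'I_m}) _.
have : s = - s.
  rewrite {1}/s (reindex_inj (inv_inj (flipK a))) /s -sumrN.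
  apply: eq_bigr => z _; rewrite flip_sub // /sg flip_odd.
  by case: (odd #|z|); rewrite /= ?mulN1r ?mul1r ?opprK.
move=> e; have : s + s = 0 by rewrite {1}e addNr.
lia.
Qed.

Lemma sum_parity m : (0 < m)%N ->
  \sum_(z : {set 'I_m}) sg z * indb (odd #|z|) != 0.
Proof.
move=> hm.
have -> : \sum_(z : {set 'I_m}) sg z * indb (odd #|z|) = - \sum_(z : {set 'I_m}) indb (odd #|z|).
  rewrite -sumrN; apply: eq_bigr => z _; rewrite /sg; case: (odd #|z|) => /=; by rewrite ?mulN1r ?mulr0 ?oppr0.
rewrite oppr_eq0; apply/negP => /eqP e.
pose a0 : 'I_m := Ordinal hm.
have : \sum_(z : {set 'I_m}) indb (odd #|z|) >= 1.
  rewrite (bigD1 [set a0]) //= cards1 /=.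
  rewrite -[X in X <= _]addr0 lerD2l; apply: sumr_ge0 => z _; by case: (odd _).
by rewrite e.
Qed.

Lemma parity_deg m d : (0 < m)%N -> deg_le d (fun z : {set 'I_m} => indb (odd #|z|)) -> (m <= d)%N.
Proof.
move=> hm [p [hp hf]]; rewrite leqNgt; apply/negP => hd.
have := sum_parity hm; rewrite (eq_bigr (fun z => sg z * peval p z)); last by move=> z _; rewrite hf.
rewrite /peval.
have -> : \sum_(z : {set 'I_m}) sg z * (\sum_(t <- p) t.1 * indb (t.2 \subset z))
   = \sum_(t <- p) t.1 * \sum_(z : {set 'I_m}) sg z * indb (t.2 \subset z).
  rewrite (eq_bigr (fun z => \sum_(t <- p) t.1 * (sg z * indb (t.2 \subset z)))); last first.
    by move=> z _; rewrite mulr_sumr; apply: eq_bigr => t _; rewrite mulrCA.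
  rewrite exchange_big /=; apply: eq_bigr => t _; by rewrite mulr_sumr.
rewrite big_seq big1 ?eqxx // => t tp; rewrite sum_mono_zero ?mulr0 //.
by apply: leq_trans hd; apply: (allP hp).
Qed.


Definition content (K V : eqType) (D : dds K V) (k : K) : seq (K * V) :=
  [seq p <- D | p.1 == k].

Definition respC (K V : eqType) (k : K) (C : seq (K * V)) : V -> nat :=
  fun v => count (pred1 (k, v)) C.

Lemma resp_content (K V : eqType) (D : dds K V) k : resp D k = respC k (content D k).
Proof.
apply: functional_extensionality => v; rewrite /resp /respC /content count_filter.
apply: eq_count => p /=; case: eqP => [->|] //=; by rewrite eqxx.
Qed.

Lemma resp_size_content (K V : eqType) (D : dds K V) k : resp_size D k = size (content D k).
Proof. by rewrite /resp_size /content size_filter. Qed.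

Lemma ideg_const m d (Y : eqType) (c : Y) : ideg (m:=m) d (fun _ => c).
Proof. move=> y; exact: deg_le_const. Qed.

Lemma run_deg (m d : nat) (K V : eqType) (S : nat) (D : {set 'I_m} -> dds K V) (mach : machine K V) :
  (forall k, ideg d (fun z => content (D z) k)) ->
  forall fuel h c, (c <= S)%N ->
  ideg ((S.+1 - c) * d) (fun z => run_machine S (D z) mach fuel h c).
Proof.
move=> hD; elim=> [|fuel IH] h c hc /=; first exact: ideg_const.
case: (mach h) => [k|w]; last exact: ideg_const.
pose F := fun (C : seq (K * V)) (z : {set 'I_m}) =>
  if (c + maxn 1 (size C) <= S)%N
  then run_machine S (D z) mach fuel (rcons h (k, respC k C)) (c + maxn 1 (size C)) else [::].
move=> y.
apply: (@deg_le_ext _ _ (fun z => (fun C z => indb (F C z == y)) (content (D z) k) z)).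
  by move=> z; rewrite /F /= resp_size_content resp_content.
have -> : ((S.+1 - c) * d = d + (S - c) * d)%N by rewrite subSn // mulSn.
apply: (@deg_le_bind m d ((S - c) * d) _ (fun z => content (D z) k) (fun C z => indb (F C z == y)) (hD k)) => C.
rewrite /F.
case hc': (c + maxn 1 (size C) <= S)%N; last exact: deg_le_const.
apply: deg_le_mono (IH _ _ hc' y); apply: leq_mul => //.
have := leq_maxl 1 (size C); lia.
Qed.

Lemma content_round (K V : eqType) S (D : dds K V) ms k :
  content (exec_round S D ms) k = flatten [seq content (exec_machine S D mach) k | mach <- ms].
Proof. by rewrite /content /exec_round filter_flatten -map_comp. Qed.

Lemma round_deg (m d : nat) (K V : eqType) (S : nat) (D : {set 'I_m} -> dds K V) (ms : seq (machine K V)) :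
  (forall k, ideg d (fun z => content (D z) k)) ->
  (forall z k, (resp_size (exec_round S (D z) ms) k <= S)%N) ->
  forall k, ideg (S * (S.+1 * d)) (fun z => content (exec_round S (D z) ms) k).
Proof.
move=> hD hL k.
have hF : forall mach, ideg (S.+1 * d) (fun z => content (exec_machine S (D z) mach) k).
  move=> mach; apply: (ideg_comp (fun o => content o k)).
  have := run_deg (S:=S) mach hD S.+1 [::] (leq0n S); by rewrite subn0.
have hmap : ideg (S * (S.+1 * d)) (fun z => [seq content (exec_machine S (D z) mach) k | mach <- ms]).
  move=> tau.
  have := @ie_lemma m (S.+1 * d) _ _ (fun mach z => content (exec_machine S (D z) mach) k) hF ms S 0 (fun _ => 1) tau (@deg_le_const m 0 1).
  move=> H; apply: deg_le_ext (H _) => [z|z _]; first by rewrite mul1r.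
  by rewrite -content_round -resp_size_content.
have := ideg_comp (@flatten _) hmap.
move=> H y; apply: deg_le_ext (H y) => z; by rewrite content_round.
Qed.

Lemma count_inj_le1 (T : eqType) (U : eqType) (f : T -> U) (hf : injective f) (s : seq T) (k : U) :
  uniq s -> (count (fun e => f e == k) s <= 1)%N.
Proof.
elim: s => [|a s IH] //= /andP [ans us].
case: (f a =P k) => [fa|_]; last by rewrite add0n IH.
rewrite (@eq_in_count _ _ pred0) ?count_pred0 // => b bs /=; apply/eqP => fb.
by move: ans; rewrite -(hf b a) ?bs // fb fa.
Qed.

Lemma base_deg (m n : nat) (K V : eqType) (keyIdx : upair n -> K) (valBit : bool -> V)
  (x : {set 'I_m} -> {ffun upair n -> bool}) :
  injective keyIdx ->
  (forall e, ideg 1 (fun z => x z e)) ->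
  forall k, ideg 1 (fun z => content (dds0 keyIdx valBit (x z)) k).
Proof.
move=> hinj hx k.
have eq1 : forall z, content (dds0 keyIdx valBit (x z)) k =
   flatten [seq content [:: (keyIdx e, valBit (x z e))] k | e <- enum (@predT (upair n))].
  move=> z; rewrite /dds0 -[X in content X _]flatten_seq1 /content filter_flatten -!map_comp.
  done.
have hF : forall e, ideg 1 (fun z => content [:: (keyIdx e, valBit (x z e))] k).
  move=> e; exact: (ideg_comp (fun b => content [:: (keyIdx e, valBit b)] k) (hx e)).
have hmap : ideg 1 (fun z => [seq content [:: (keyIdx e, valBit (x z e))] k | e <- enum (@predT (upair n))]).
  move=> tau.
  have := @ie_lemma m 1 _ _ (fun e z => content [:: (keyIdx e, valBit (x z e))] k) hF (enum (@predT (upair n))) 1 0 (fun _ => 1) tau (@deg_le_const m 0 1).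
  move=> H; apply: deg_le_ext (H _) => [z|z _]; first by rewrite mul1r.
  rewrite -eq1 /content /dds0 size_filter count_map.
  exact: (count_inj_le1 hinj k (enum_uniq _)).
have := ideg_comp (@flatten _) hmap.
move=> H y; apply: deg_le_ext (H y) => z; by rewrite eq1.
Qed.

Lemma dds_at0 (n : nat) (K V : eqType) S (keyIdx : upair n -> K) (valBit : bool -> V) alg x :
  dds_at S keyIdx valBit alg x 0 = dds0 keyIdx valBit x.
Proof. by rewrite /dds_at take0. Qed.

Lemma dds_atS (n : nat) (K V : eqType) S (keyIdx : upair n -> K) (valBit : bool -> V) alg x r :
  (r < size alg)%N ->
  dds_at S keyIdx valBit alg x r.+1 = exec_round S (dds_at S keyIdx valBit alg x r) (nth [::] alg r).
Proof. by move=> hr; rewrite /dds_at (take_nth [::] hr) foldl_rcons. Qed.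

Lemma rounds_deg (m n : nat) (K V : eqType) S (keyIdx : upair n -> K) (valBit : bool -> V)
  (alg : algorithm K V) (x : {set 'I_m} -> {ffun upair n -> bool}) :
  injective keyIdx -> (forall e, ideg 1 (fun z => x z e)) -> key_load_ok S keyIdx valBit alg ->
  forall r, (r <= size alg)%N ->
  forall k, ideg ((S * S.+1) ^ r) (fun z => content (dds_at S keyIdx valBit alg (x z) r) k).
Proof.
move=> hinj hx hL; elim=> [|r IH] hr k.
  rewrite expn0; move=> y; apply: deg_le_ext (base_deg valBit hinj hx k y) => z.
  by rewrite dds_at0.
have hr' : (r < size alg)%N by [].
have := @round_deg m _ K V S (fun z => dds_at S keyIdx valBit alg (x z) r) (nth [::] alg r) (IH (ltnW hr')).
move=> H y.
have H2 := H _ k y.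
rewrite expnS -mulnA.
apply: deg_le_ext (H2 _) => [z|z k']; first by rewrite dds_atS.
rewrite -dds_atS //; exact: hL.
Qed.

Local Close Scope ring_scope.


Definition zb (m : nat) (z : {set 'I_m}) (a : nat) : bool :=
  if @insub _ (fun i => i < m) 'I_m a is Some i then i \in z else false.

Definition xf (m h : nat) (z : {set 'I_m}) (p q : nat) : bool :=
  if q %/ 2 == (p %/ 2).+1 then ((p %% 2) != (q %% 2)) == zb z (p %/ 2)
  else [&& p %/ 2 == 0, q %/ 2 == h.-1 & p %% 2 == q %% 2].

Definition xg (n : nat) (z : {set 'I_(n %/ 2).-1}) : {ffun upair n -> bool} :=
  [ffun e : upair n => xf (n %/ 2) z (val e).1 (val e).2].

Lemma zb_deg m a (F : bool -> int) : deg_le 1 (fun z : {set 'I_m} => F (zb z a)).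
Proof.
rewrite /zb; case: insubP => [i _ _|_]; first exact: deg_le_var.
exact: deg_le_const.
Qed.

Lemma xg_deg n (e : upair n) : ideg 1 (fun z => xg z e).
Proof.
move=> y; rewrite /ideg.
pose F := fun b : bool => indb ((if (val e).2 %/ 2 == ((val e).1 %/ 2).+1 then ((((val e).1 : nat) %% 2) != (((val e).2 : nat) %% 2)) == b
  else [&& ((val e).1 : nat) %/ 2 == 0, ((val e).2 : nat) %/ 2 == (n %/ 2).-1 & ((val e).1 : nat) %% 2 == ((val e).2 : nat) %% 2]) == y).
apply: deg_le_ext (zb_deg _ ((val e).1 %/ 2) F) => z.
by rewrite /F /xg ffunE /xf.
Qed.

Lemma adjE n (x : {ffun upair n -> bool}) (f : nat -> nat -> bool)
  (hx : forall e : upair n, x e = f (val e).1 (val e).2) (p q : 'I_n) :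
  adj x p q = if (p < q)%N then f p q else if (q < p)%N then f q p else false.
Proof.
rewrite /adj; case: (ltngtP p q) => hpq.
- by rewrite (@insubT _ (fun pr : 'I_n * 'I_n => (pr.1 < pr.2)%N) (upair n) (p, q) hpq) hx SubK.
- rewrite (@insubF _ (fun pr : 'I_n * 'I_n => (pr.1 < pr.2)%N) (upair n)) /=; last by rewrite ltnNge ltnW.
  by rewrite (@insubT _ (fun pr : 'I_n * 'I_n => (pr.1 < pr.2)%N) (upair n) (q, p) hpq) hx SubK.
- have e : p = q by apply: val_inj.
  rewrite e !(@insubF _ (fun pr : 'I_n * 'I_n => (pr.1 < pr.2)%N) (upair n)) //= ltnn //.
Qed.


Lemma xf_coords m h (z : {set 'I_m}) (A B : nat) (a b : bool) : (3 <= h) -> (A < h) -> (B < h) ->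
  (if (2 * A + a < 2 * B + b) then xf h z (2 * A + a) (2 * B + b)
   else if (2 * B + b < 2 * A + a) then xf h z (2 * B + b) (2 * A + a) else false) =
  [|| (B == A.+1) && (addb a b == zb z A), (A == B.+1) && (addb a b == zb z B)
    | (a == b) && ((A == 0) && (B == h.-1) || (B == 0) && (A == h.-1))].
Proof.
move=> h3 hA hB.
have [dA mA] : (2 * A + a) %/ 2 = A /\ (2 * A + a) %% 2 = a by case: a; split; lia.
have [dB mB] : (2 * B + b) %/ 2 = B /\ (2 * B + b) %% 2 = b by case: b; split; lia.
rewrite /xf dA dB mA mB.
have E1 : forall a b : bool, ((a : nat) != b) = addb a b by case; case.
have E2 : forall a b : bool, ((a : nat) == b) = (a == b) by case; case.
rewrite !E1 !E2 [addb b a]addbC [b == a]eq_sym.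
have ha : (a : nat) <= 1 by case: (a).
have hb : (b : nat) <= 1 by case: (b).
case: ifP => h1; [|case: ifP => h2]; repeat (case: eqP => ?; rewrite /=); try done; exfalso; lia.
Qed.

Lemma modS_small (u N : nat) : u < N -> u.+1 %% N = if u.+1 == N then 0 else u.+1.
Proof.
move=> h; case: eqP => [->|ne]; first by rewrite modnn.
by rewrite modn_small //; lia.
Qed.

Lemma cyc_coords h (A B : nat) (la lb : bool) : 3 <= h -> A < h -> B < h ->
  cyc_rel (2 * h) (A + la * h) (B + lb * h) =
  [|| (B == A.+1) && (la == lb), (A == B.+1) && (la == lb),
      [&& A == h.-1, B == 0 & lb == ~~ la] | [&& B == h.-1, A == 0 & la == ~~ lb]].
Proof.
move=> h3 hA hB; rewrite /cyc_rel !addn1.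
rewrite (@modS_small (A + la * h)); last by case: (la); lia.
rewrite (@modS_small (B + lb * h)); last by case: (lb); lia.
case: la; case: lb; rewrite /= ?mul1n ?mul0n ?addn0;
  case: ifP => /eqP ?; case: ifP => /eqP ?;
  repeat (case: eqP => ?; rewrite /=); try done; exfalso; lia.
Qed.

Lemma two_coords h (A B : nat) (la lb : bool) : 3 <= h -> A < h -> B < h ->
  two_cyc_rel h (A + la * h) (B + lb * h) =
  [|| (B == A.+1) && (la == lb), (A == B.+1) && (la == lb),
      [&& A == h.-1, B == 0 & lb == la] | [&& B == h.-1, A == 0 & la == lb]].
Proof.
move=> h3 hA hB; rewrite /two_cyc_rel /cyc_rel !addn1.
have mA : (A + la * h) %% h = A by case: (la); rewrite ?mul1n ?mul0n ?addn0 ?modnDr modn_small.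
have mB : (B + lb * h) %% h = B by case: (lb); rewrite ?mul1n ?mul0n ?addn0 ?modnDr modn_small.
rewrite mA mB (modS_small hA) (modS_small hB); clear mA mB.
have f1 : (A + h < h) = false by apply/negbTE; rewrite -leqNgt leq_addl.
have f2 : (B + h < h) = false by apply/negbTE; rewrite -leqNgt leq_addl.
case: la; case: lb; rewrite /= ?mul1n ?mul0n ?addn0 ?hA ?hB ?f1 ?f2 /=;
  repeat (case: ifP => /eqP ?);
  repeat (case: eqP => ?; rewrite /=); try done; exfalso; lia.
Qed.


Definition pre (m : nat) (z : {set 'I_m}) (k : nat) : bool := odd (count (zb z) (iota 0 k)).

Lemma pre0 m (z : {set 'I_m}) : pre z 0 = false.
Proof. by []. Qed.

Lemma preS m (z : {set 'I_m}) k : pre z k.+1 = pre z k (+) zb z k.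
Proof. by rewrite /pre -addn1 iotaD count_cat /= addn0 oddD add0n; case: (zb z k). Qed.

Lemma pre_m m (z : {set 'I_m}) : pre z m = odd #|z|.
Proof.
rewrite /pre -val_enum_ord count_map.
have -> : #|z| = count (mem z) (enum 'I_m).
  by rewrite cardE /enum_mem size_filter /enum_mem count_filter; apply: eq_count => i; rewrite /= andbT.
congr odd; apply: eq_count => i /=; by rewrite /zb valK.
Qed.

Definition kk (h u : nat) := if h <= u then u - h else u.

Definition sigf (n : nat) (z : {set 'I_(n %/ 2).-1}) (u : nat) : nat :=
  2 * kk (n %/ 2) u + (pre z (kk (n %/ 2) u) (+) (n %/ 2 <= u)).

Definition sigo (n : nat) (z : {set 'I_(n %/ 2).-1}) (u : 'I_n) : 'I_n := insubd u (@sigf n z u).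

Lemma n2h n : ~~ odd n -> n = 2 * (n %/ 2).
Proof. move=> ho; have := modn2 n; rewrite (negbTE ho) => h0; lia. Qed.

Lemma kk_lt n (u : 'I_n) : ~~ odd n -> kk (n %/ 2) u < n %/ 2.
Proof. move=> ho; have := n2h ho; have := ltn_ord u; rewrite /kk; case: ifP => ?; lia. Qed.

Lemma kk_eq n (u : 'I_n) : (u : nat) = kk (n %/ 2) u + (n %/ 2 <= u) * (n %/ 2).
Proof. rewrite /kk; case: ifP => h; rewrite ?mul1n ?mul0n ?addn0 // subnK //. Qed.

Lemma sigf_lt n z (u : 'I_n) : ~~ odd n -> @sigf n z u < n.
Proof.
move=> ho; have := kk_lt u ho; have := n2h ho; rewrite /sigf.
case: (_ (+) _) => /=; lia.
Qed.

Lemma val_sigo n z (u : 'I_n) : ~~ odd n -> (sigo z u : nat) = @sigf n z u.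
Proof. by move=> ho; rewrite /sigo val_insubd sigf_lt. Qed.

Lemma sigo_inj n z (ho : ~~ odd n) : injective (@sigo n z).
Proof.
move=> u v e; have : @sigf n z u = @sigf n z v by rewrite -!val_sigo // e.
rewrite /sigf => e2.
have eA : kk (n %/ 2) u = kk (n %/ 2) v.
  move: e2; case: (_ (+) _); case: (_ (+) _) => /=; lia.
move: e2; rewrite eA => /eqP; rewrite eqn_add2l => /eqP e3.
have eL : (n %/ 2 <= u) = (n %/ 2 <= v).
  by move: e3; case: (pre _ _); case: (_ <= u); case: (_ <= v).
apply: val_inj; rewrite /= (kk_eq u) (kk_eq v) eA eL //.
Qed.

Lemma coords_bool m (z : {set 'I_m}) h A B (la lb : bool) : 3 <= h -> m = h.-1 -> A < h -> B < h ->
  [|| (B == A.+1) && ((pre z A (+) la) (+) (pre z B (+) lb) == zb z A),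
      (A == B.+1) && ((pre z A (+) la) (+) (pre z B (+) lb) == zb z B)
    | ((pre z A (+) la) == (pre z B (+) lb)) && ((A == 0) && (B == h.-1) || (B == 0) && (A == h.-1))] =
  [|| (B == A.+1) && (la == lb), (A == B.+1) && (la == lb),
      [&& A == h.-1, B == 0 & lb == odd #|z| (+) la] | [&& B == h.-1, A == 0 & la == odd #|z| (+) lb]].
Proof.
move=> h3 em hA hB.
have hpar : pre z h.-1 = odd #|z| by rewrite -em pre_m.
congr orb.
  case: eqP => //= ->; rewrite preS; by case: (pre z A); case: la; case: lb; case: (zb z A).
congr orb.
  case: eqP => //= ->; rewrite preS; by case: (pre z B); case: la; case: lb; case: (zb z B).
have h0 : (0 == h.-1) = false by apply/eqP; lia.
case: (A =P 0) => [->|nA]; case: (B =P 0) => [->|nB]; rewrite ?h0 /= ?andbF ?orbF //.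
- case: (B =P h.-1) => [->|] /=; last by rewrite andbF.
  by rewrite hpar ?pre0 /=; case: la; case: lb; case: (odd #|z|).
- case: (A =P h.-1) => [->|] /=; last by rewrite andbF.
  by rewrite hpar ?pre0 /=; case: la; case: lb; case: (odd #|z|).
Qed.

Lemma adj_sig n (z : {set 'I_(n %/ 2).-1}) (u v : 'I_n) : ~~ odd n -> 3 <= n %/ 2 ->
  adj (xg z) (sigo z u) (sigo z v) =
  [|| (kk (n %/ 2) v == (kk (n %/ 2) u).+1) && ((n %/ 2 <= u) == (n %/ 2 <= v)),
      (kk (n %/ 2) u == (kk (n %/ 2) v).+1) && ((n %/ 2 <= u) == (n %/ 2 <= v)),
      [&& kk (n %/ 2) u == (n %/ 2).-1, kk (n %/ 2) v == 0 & (n %/ 2 <= v) == odd #|z| (+) (n %/ 2 <= u)]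
    | [&& kk (n %/ 2) v == (n %/ 2).-1, kk (n %/ 2) u == 0 & (n %/ 2 <= u) == odd #|z| (+) (n %/ 2 <= v)]].
Proof.
move=> ho h3.
rewrite (@adjE n (xg z) (xf (n %/ 2) z)); last by move=> e; rewrite ffunE.
rewrite !val_sigo // /sigf xf_coords //; try exact: kk_lt.
by rewrite coords_bool //; exact: kk_lt.
Qed.

Lemma valid_odd n (z : {set 'I_(n %/ 2).-1}) : ~~ odd n -> 3 <= n %/ 2 -> odd #|z| -> one_cycle (xg z).
Proof.
move=> ho h3 hz; exists (perm (@sigo_inj n z ho)) => u v; rewrite !permE adj_sig //.
have e : cyc_rel n = cyc_rel (2 * (n %/ 2)) by rewrite -n2h.
rewrite e [in RHS](kk_eq u) [in RHS](kk_eq v) cyc_coords //; try exact: kk_lt.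
by rewrite hz.
Qed.

Lemma valid_even n (z : {set 'I_(n %/ 2).-1}) : ~~ odd n -> 3 <= n %/ 2 -> ~~ odd #|z| -> two_cycles (xg z).
Proof.
move=> ho h3 hz; exists (perm (@sigo_inj n z ho)) => u v; rewrite !permE adj_sig //.
have e : n./2 = n %/ 2 by rewrite -divn2.
rewrite e [in RHS](kk_eq u) [in RHS](kk_eq v) two_coords //; try exact: kk_lt.
by rewrite (negbTE hz).
Qed.


Lemma nat_bound (n S : nat) (K V : eqType)
  (keyIdx : upair n -> K) (valBit : bool -> V) (answer : K) (alg : algorithm K V) :
  ~~ odd n -> 2 <= S -> injective keyIdx -> injective valBit ->
  key_load_ok S keyIdx valBit alg ->
  computes_1v2Cycle S keyIdx valBit answer alg ->
  n <= 32 * S ^ (3 * size alg).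
Proof.
move=> ho hS hinj hvinj hL hC.
have hpos : 1 <= S ^ (3 * size alg) by rewrite expn_gt0; lia.
case: (leqP n 32) => hn; first by lia.
have h3 : 3 <= n %/ 2 by lia.
have hm : 0 < (n %/ 2).-1 by lia.
have hx : forall e, ideg 1 (fun z => @xg n z e) by move=> e; exact: xg_deg.
have H := @rounds_deg (n %/ 2).-1 n K V S keyIdx valBit alg (@xg n) hinj hx hL (size alg) (leqnn _) answer [:: (answer, valBit true)].
have Hp : deg_le ((S * S.+1) ^ size alg) (fun z : {set 'I_(n %/ 2).-1} => indb (odd #|z|)).
  apply: deg_le_ext H => z.
  case: (boolP (odd #|z|)) => hz.
    rewrite (proj1 (hC (xg z)) (valid_odd ho h3 hz)) /content /=.
    by rewrite !eqxx.
  rewrite (proj2 (hC (xg z)) (valid_even ho h3 hz)) /content /= eqxx /=.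
  case: eqP => // [[/hvinj]] //.
have := parity_deg hm Hp.
have : (S * S.+1) ^ size alg <= S ^ (3 * size alg).
  rewrite mulnC expnM; case: (size alg) => [|r]; first by [].
  rewrite leq_exp2r //.
  have -> : S ^ 3 = S * (S * S) by rewrite (expnS S 2) (expnS S 1) expn1.
  nia.
have := n2h ho; lia.
Qed.



Local Open Scope R_scope.

Lemma INR_expn (a k : nat) : INR (a ^ k)%N = INR a ^ k.
Proof. elim: k => [|k IH] //; by rewrite expnS mult_INR IH /=. Qed.

Lemma ln_mono (x y : R) : (0 < x) -> (x <= y) -> (ln x <= ln y).
Proof.
move=> hx hxy; case: (Rle_lt_or_eq_dec _ _ hxy) => [h|->]; last exact: Rle_refl.
left; exact: ln_increasing.
Qed.

Lemma real_part (n S r : nat) : (2 <= S)%N -> (n <= 32 * S ^ (3 * r))%N ->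
  Rle (round_lower_bound n S) (INR r).
Proof.
move=> hS hb.
have hS1 : (1 < INR S) by apply: lt_1_INR; apply/ltP.
have ha : (0 < ln (INR S)) by rewrite -ln_1; apply: ln_increasing; lra.
have h32 : (0 < ln (IZR 32)) by rewrite -ln_1; apply: ln_increasing; lra.
have hr : (0 <= INR r) by apply: pos_INR.
have key : (ln (INR n) <= ln (IZR 32) + 3 * INR r * ln (INR S)).
  case: n hb => [|n'] hb.
    have -> : ln (INR 0) = 0.
      unfold ln; simpl.
      case: (Rlt_dec 0 0) => [h|h] //; exfalso; exact: (Rlt_irrefl 0 h).
    have : (0 <= 3 * INR r * ln (INR S)) by apply: Rmult_le_pos; lra.
    lra.
  have hpos : (0 < INR n'.+1) by apply: lt_0_INR; apply/ltP.
  have := le_INR _ _ (elimT leP hb); rewrite mult_INR INR_expn => hle.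
  have e32 : INR 32 = IZR 32 by rewrite INR_IZR_INZ.
  rewrite e32 in hle.
  have hSp : (0 < INR S ^ (3 * r)) by apply: pow_lt; lra.
  have := ln_mono hpos hle; rewrite ln_mult ?ln_pow //; try lra.
  by rewrite mult_INR /=; lra.
rewrite /round_lower_bound /logb.
have e1 : (/ IZR 3 * (ln (INR n) / ln (INR S)) - / IZR 3 * (ln (IZR 32) / ln (INR S)))
          = ((ln (INR n) - ln (IZR 32)) * / (3 * ln (INR S))) by field; lra.
have e2 : INR r = ((3 * INR r * ln (INR S)) * / (3 * ln (INR S))) by field; lra.
rewrite e1 [X in (_ <= X)]e2.
apply: Rmult_le_compat_r; last by lra.
left; apply: Rinv_0_lt_compat; lra.
Qed.

Local Close Scope R_scope.

Theorem theorem4p7 (n S : nat) (K V : eqType)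
  (keyIdx : upair n -> K) (valBit : bool -> V) (answer : K) (alg : algorithm K V) :
  ~~ odd n ->
  2 <= S ->
  injective keyIdx ->
  injective valBit ->
  key_load_ok S keyIdx valBit alg ->
  computes_1v2Cycle S keyIdx valBit answer alg ->
  Rle (round_lower_bound n S) (INR (size alg)).
Proof.
move=> ho hS hinj hvinj hL hC.
apply: real_part => //.
exact: (nat_bound ho hS hinj hvinj hL hC).
Qed.
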